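(* Let $d\ge1$ and let $LG(d,2d)$ be the Lagrangian Grassmannian of $d$-dimensional isotropic subspaces of $\mathbb C^{2d}$ equipped with a symplectic form. Let $U,V,W\in LG(d,2d)$ be pairwise in general position, i.e. $U\cap V=U\cap W=V\cap W=0$. Then there is a unique morphism $f\colon\mathbb P^1\to LG(d,2d)$ of degree $d$ with $f(0)=U$, $f(1)=V$, $f(\infty)=W$.
   Context: The degree of a morphism $f\colon\mathbb P^1\to LG(d,2d)$ is $\int f_*[\mathbb P^1]\cdot\sigma_1$, where $\sigma_1$ is the class of the Schubert divisor (the restriction of the Schubert divisor class of the ambient Grassmannian $G(d,2d)$). *)

(* Defs.v *)
From HB Require Import structures.
From mathcomp Require Import all_boot all_order all_algebra.
From mathcomp Require Import reals.
From mathcomp.real_closed Require Import complex.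
Set Implicit Arguments. Unset Strict Implicit. Unset Printing Implicit Defensive.
Import Order.TTheory GRing.Theory Num.Theory.
Local Open Scope ring_scope.

(* Ground field: the complex numbers C = R[i] for R a (complete archimedean)
   real field; points of P^1 are nonzero pairs (s,t) in C^2 up to scaling,
   with 0 = [0:1], 1 = [1:1], infinity = [1:0]. *)

(* Subspaces of C^n are row spaces of matrices; a d-dimensional subspace is
   the row space of a rank-d matrix in 'M_(d, n). *)

Definition lagrangian (C : fieldType) (d n : nat) (J : 'M[C]_n)
    (U : 'M[C]_(d, n)) : Prop :=
  \rank U = d /\ U *m J *m U^T = 0.

Definition symplectic (C : fieldType) (n : nat) (J : 'M[C]_n) : Prop :=
  J^T = - J /\ \det J != 0.

(* evaluation of a binary form of degree e, encoded by the univariate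
   polynomial p (size p <= e+1), at (s,t): sum_i p_i s^i t^(e-i) *)
Definition hev (C : fieldType) (e : nat) (p : {poly C}) (s t : C) : C :=
  \sum_(i < e.+1) p`_i * s ^+ i * t ^+ (e - i).

(* (generalised) Plücker coordinates of A : all d x d minors on column
   selections g : 'I_d -> 'I_n (each is 0 or +- a Plücker coordinate). *)
Definition pluck (C : fieldType) (d n : nat) (A : 'M[C]_(d, n))
    (g : {ffun 'I_d -> 'I_n}) : C :=
  \det (colsub g A).

(* f : P^1 -> LG(d, n) (given on homogeneous coordinates) is a morphism of
   degree e: its values at points of P^1 are Lagrangian subspaces, and its
   composite with the Plücker embedding is a morphism P^1 -> P^N given by
   binary forms of degree e without common zero. The degree e is then
   deg f^*O(1) = int f_*[P^1] . sigma_1. *)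
Definition LGmorphism_deg (C : fieldType) (d n : nat) (J : 'M[C]_n)
    (f : C -> C -> 'M[C]_(d, n)) (e : nat) : Prop :=
  (forall s t : C, (s, t) != (0, 0) -> lagrangian J (f s t)) /\
  exists q : {ffun 'I_d -> 'I_n} -> {poly C},
    (forall g, (size (q g) <= e.+1)%N) /\
    (forall s t : C, (s, t) != (0, 0) -> exists g, hev e (q g) s t != 0) /\
    (forall s t : C, (s, t) != (0, 0) ->
       exists c : C, c != 0 /\
         forall g, pluck (f s t) g = c * hev e (q g) s t).

(* Main.v *)
Require Import Defs.
From HB Require Import structures.
From mathcomp Require Import all_boot all_order all_algebra.
From mathcomp Require Import reals.
From mathcomp.real_closed Require Import complex.
From mathcomp Require Import ring all_fingroup.
Set Implicit Arguments. Unset Strict Implicit. Unset Printing Implicit Defensive.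
Import Order.TTheory GRing.Theory Num.Theory.
Local Open Scope ring_scope.

Section Gen.
Variable C : numFieldType.

Lemma poly_all0 (p : {poly C}) : (forall x, p.[x] = 0) -> p = 0.
Proof.
move=> H; apply: (@roots_geq_poly_eq0 _ p [seq i%:R | i <- iota 0 (size p)]).
- by apply/allP => x /mapP [i _ ->]; rewrite /root H.
- rewrite map_inj_uniq ?iota_uniq // => i j /eqP; rewrite eqr_nat => /eqP.
  done.
- by rewrite size_map size_iota.
Qed.

Lemma poly_eq_off (p r Q : {poly C}) : Q != 0 ->
  (forall x, Q.[x] != 0 -> p.[x] = r.[x]) -> p = r.
Proof.
move=> Q0 H; apply/eqP; rewrite -subr_eq0.
have: (p - r) * Q = 0.
  apply: poly_all0 => x; rewrite hornerM hornerD hornerN.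
  have [->|/H ->] := eqVneq Q.[x] 0; first by rewrite mulr0.
  by rewrite subrr mul0r.
by move/eqP; rewrite mulf_eq0 (negPf Q0) orbF.
Qed.
End Gen.

Section Hev.
Variable C : fieldType.
Implicit Types (p q : {poly C}) (s t : C).

Lemma hevD e p q s t : hev e (p + q) s t = hev e p s t + hev e q s t.
Proof. by rewrite /hev -big_split; apply: eq_bigr => i _; rewrite coefD !mulrDl. Qed.

Lemma hev0 e s t : hev e 0 s t = 0.
Proof. by rewrite /hev big1 // => i _; rewrite coef0 !mul0r. Qed.

Lemma hevCM e c p s t : hev e (c%:P * p) s t = c * hev e p s t.
Proof. by rewrite /hev big_distrr; apply: eq_bigr => i _; rewrite coefCM -!mulrA. Qed.

Lemma hev_sum e I (r : seq I) (P : pred I) (F : I -> {poly C}) s t :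
  hev e (\sum_(i <- r | P i) F i) s t = \sum_(i <- r | P i) hev e (F i) s t.
Proof.
by elim/big_rec2: _ => [|i y p _ <-]; rewrite ?hev0 ?hevD.
Qed.

Lemma hev_mul_lin m p a b s t : (size p <= m.+1)%N ->
  hev m.+1 (p * (a%:P + 'X * b%:P)) s t = hev m p s t * (t * a + s * b).
Proof.
move=> sp; rewrite mulrDr mulrA hevD mulrDr; congr (_ + _).
  rewrite /hev big_ord_recr /= coefMC (nth_default 0 sp) mul0r !mul0r addr0.
  rewrite big_distrl; apply: eq_bigr => i _ /=; rewrite coefMC subSn ?exprS;
    last by rewrite -ltnS.
  ring.
rewrite /hev big_ord_recl /= coefMC coefMX eqxx mul0r !mul0r add0r.
rewrite big_distrl; apply: eq_bigr => i _ /=; rewrite coefMC coefMX /=.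
rewrite /bump leq0n add1n subSS exprS.
ring.
Qed.

Lemma hev_prod m (a b : 'I_m -> C) s t :
  leq (size (\prod_(i < m) ((a i)%:P + 'X * (b i)%:P))) m.+1 /\
  hev m (\prod_(i < m) ((a i)%:P + 'X * (b i)%:P)) s t =
  \prod_(i < m) (t * a i + s * b i).
Proof.
elim: m a b => [|m IH] a b.
  by rewrite !big_ord0 size_poly1 /hev big_ord1 coef1 /= !mulr1.
have [IH1 IH2] := IH (fun i => a (widen_ord (leqnSn m) i))
                     (fun i => b (widen_ord (leqnSn m) i)).
rewrite !big_ord_recr /=; split; last by rewrite hev_mul_lin // IH2.
apply: leq_trans (size_polyMleq _ _) _.
have h2 : leq (size ((a ord_max)%:P + 'X * (b ord_max)%:P)) 2.
  apply: leq_trans (size_polyD _ _) _; rewrite geq_max size_polyC.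
  apply/andP; split; first by case: (_ != 0).
  apply: leq_trans (size_polyMleq _ _) _; rewrite size_polyX size_polyC.
  by case: (_ != 0).
have := leq_add IH1 h2; move: (size _ + size _)%N => k h.
by rewrite -subn1 leq_subLR add1n (leq_trans h) // addnS addn1.
Qed.
End Hev.

Section HevDet.
Variable C : fieldType.
Lemma hev_det m (A B : 'M[C]_m) s t :
  leq (size (\det (\matrix_(i, j) ((A i j)%:P + 'X * (B i j)%:P))))  m.+1 /\
  hev m (\det (\matrix_(i, j) ((A i j)%:P + 'X * (B i j)%:P))) s t
    = \det (t *: A + s *: B).
Proof.
have E : forall (sg : 'S_m), (-1) ^+ sg = (((-1) ^+ sg : C)%:P) :> {poly C}.
  by move=> sg; rewrite rmorph_sign.
split.
  rewrite /determinant; apply: (big_ind (fun p : {poly C} => leq (size p) m.+1)).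
  - by rewrite size_poly0.
  - by move=> p q hp hq; apply: leq_trans (size_polyD _ _) _; rewrite geq_max hp hq.
  move=> sg _; rewrite E; apply: leq_trans (size_polyMleq _ _) _.
  have [h _] := hev_prod (fun i => A i (sg i)) (fun i => B i (sg i)) s t.
  rewrite size_polyC signr_eq0 /=.
  rewrite add0n; apply: leq_trans h; rewrite leq_eqVlt; apply/orP; left; apply/eqP.
  by congr size; under eq_bigr do rewrite mxE.
rewrite /determinant hev_sum; apply: eq_bigr => sg _.
rewrite E hevCM; congr (_ * _).
have [_ h] := hev_prod (fun i => A i (sg i)) (fun i => B i (sg i)) s t.
rewrite (eq_bigr (fun i => (A i (sg i))%:P + 'X * (B i (sg i))%:P)); last first.
  by move=> i _; rewrite mxE.
by rewrite h; apply: eq_bigr => i _; rewrite !mxE.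
Qed.
End HevDet.

Definition upd d n (g : {ffun 'I_d -> 'I_n}) (i : 'I_d) (k : 'I_n) :
  {ffun 'I_d -> 'I_n} := [ffun j => if j == i then k else g j].

Section Mx.
Variable C : fieldType.

Lemma det_upd d n (M : 'M[C]_(d, n)) (g0 : {ffun 'I_d -> 'I_n}) i k :
  colsub g0 M = 1%:M -> \det (colsub (upd g0 i k) M) = M i k.
Proof.
move=> H.
have Hg : forall a b, M a (g0 b) = (a == b)%:R.
  by move/matrixP: H => H a b; have := H a b; rewrite !mxE.
pose C' := \matrix_(a, b) (if a == i then (if b == i then 0 else M b k)
                            else ((a == b)%:R : C)).
rewrite -det_tr.
rewrite (@determinant_multilinear _ _ _ 1%:M C' i (M i k) 1).
- rewrite det1 mulr1.
  suff -> : \det C' = 0 by rewrite mulr0 addr0.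
  rewrite -det_tr (expand_det_row _ i) big1 // => j _.
  by rewrite !mxE eqxx; case: (j == i); rewrite ?mul0r.
- apply/rowP => b; rewrite !mxE /upd ffunE eqxx [i == b]eq_sym.
  by case: eqP => [->|_]; rewrite ?mulr1 ?mul1r ?addr0 ?mulr0 ?add0r.
- apply/matrixP => a b; rewrite !mxE /upd ffunE.
  have -> : (lift i a == i) = false by apply/negP => /eqP E; move: (neq_lift i a); rewrite E eqxx.
  by rewrite Hg eq_sym.
- apply/matrixP => a b; rewrite !mxE /upd ffunE.
  have -> : (lift i a == i) = false by apply/negP => /eqP E; move: (neq_lift i a); rewrite E eqxx.
  by rewrite Hg eq_sym.
Qed.

End Mx.

Section Mx2.
Variable C : fieldType.

Lemma colsubM d m n (D : 'M[C]_(m, d)) (X : 'M[C]_(d, n)) k (g : 'I_k -> 'I_n) :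
  colsub g (D *m X) = D *m colsub g X.
Proof. by rewrite mulmx_colsub. Qed.

Lemma pluckM d n (D : 'M[C]_d) (X : 'M[C]_(d, n)) g :
  pluck (D *m X) g = \det D * pluck X g.
Proof. by rewrite /pluck colsubM det_mulmx. Qed.

Lemma pluckZ d n a (X : 'M[C]_(d, n)) g : pluck (a *: X) g = a ^+ d * pluck X g.
Proof.
rewrite /pluck -detZ; congr (\det _); by apply/matrixP => i j; rewrite !mxE.
Qed.

Lemma pluck_diag d n (X : 'M[C]_(d, n)) (dl : 'rV[C]_n) g :
  pluck (X *m diag_mx dl) g = pluck X g * \prod_j dl 0 (g j).
Proof.
rewrite /pluck.
have -> : colsub g (X *m diag_mx dl) = colsub g X *m diag_mx (\row_j dl 0 (g j)).
  by apply/matrixP => i j; rewrite mxE !mul_mx_diag !mxE.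
by rewrite det_mulmx det_diag; congr (_ * _); apply: eq_bigr => j _; rewrite mxE.
Qed.

Lemma prod_if d (P : pred 'I_d) (a b : C) :
  \prod_j (if P j then a else b) = a ^+ #|P| * b ^+ #|[predC P]|.
Proof.
rewrite (bigID P) /=; congr (_ * _).
  by rewrite (eq_bigr (fun _ => a)) ?prodr_const // => j ->.
by rewrite (eq_bigr (fun _ => b)) ?prodr_const // => j /negPf ->.
Qed.

Lemma eqmx_rep d n (Y B : 'M[C]_(d, n)) (K : 'M[C]_(n, d)) :
  B *m K = 1%:M -> (Y == B)%MS -> exists D : 'M[C]_d, Y = D *m B /\ \det D != 0.
Proof.
move=> BK /andP [YB BY].
case/submxP: YB => D YD; case/submxP: BY => D' BD; rewrite YD in BD.
exists D; split => //.
have : D' *m D = 1%:M.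
  by rewrite -BK BD !mulmxA -(mulmxA _ B K) BK mulmx1.
move/(congr1 determinant); rewrite det_mulmx det1 => h.
by apply/eqP => h0; move: h; rewrite h0 mulr0 => /eqP; rewrite eq_sym oner_eq0.
Qed.

Lemma pluck_prop d n (A B : 'M[C]_(d, n)) (lam : C) (g0 : {ffun 'I_d -> 'I_n}) :
  lam != 0 -> pluck B g0 != 0 -> (forall g, pluck A g = lam * pluck B g) ->
  (A == B)%MS.
Proof.
move=> l0 B0 H.
have A0 : pluck A g0 != 0 by rewrite H mulf_neq0.
have uA : colsub g0 A \in unitmx by rewrite unitmxE unitfE.
have uB : colsub g0 B \in unitmx by rewrite unitmxE unitfE.
pose A' := invmx (colsub g0 A) *m A; pose B' := invmx (colsub g0 B) *m B.
have cA : colsub g0 A' = 1%:M by rewrite colsubM mulVmx.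
have cB : colsub g0 B' = 1%:M by rewrite colsubM mulVmx.
have eA : (A' :=: A)%MS by apply: eqmxMfull; rewrite row_full_unit unitmx_inv.
have eB : (B' :=: B)%MS by apply: eqmxMfull; rewrite row_full_unit unitmx_inv.
suff E : A' = B' by apply/eqmxP; apply: (eqmx_trans (eqmx_sym eA)); rewrite E.
apply/matrixP => i k.
rewrite -(det_upd i k cA) -(det_upd i k cB) -!/(pluck _ _) !pluckM !det_inv H.
rewrite -[\det (colsub g0 A)]/(pluck A g0) -[\det (colsub g0 B)]/(pluck B g0) H.
by field; apply/andP.
Qed.
End Mx2.

Section CB.
Variable C : fieldType.
Lemma det_mulmx_rect d n (X : 'M[C]_(d, n)) (M : 'M[C]_(n, d)) :
  \det (X *m M) =
  \sum_(g : {ffun 'I_d -> 'I_n}) pluck X g * \prod_j M (g j) j.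
Proof.
rewrite -det_tr trmx_mul.
transitivity (\sum_(s : 'S_d) (-1) ^+ s *
   \sum_(f : {ffun 'I_d -> 'I_n}) \prod_i (M (f i) i * X (s i) (f i))).
  apply: eq_bigr => s _; congr (_ * _).
  under eq_bigr => i _ do rewrite mxE.
  rewrite bigA_distr_bigA /=.
  by apply: eq_bigr => f _; apply: eq_bigr => i _; rewrite !mxE.
under eq_bigr do rewrite big_distrr.
rewrite exchange_big /=; apply: eq_bigr => f _.
rewrite mulrC /pluck -det_tr /determinant big_distrr /=.
apply: eq_bigr => s _; rewrite big_split /=.
rewrite [X in _ = _ * (_ * X)](eq_bigr (fun i => X (s i) (f i))); last by move=> i _; rewrite !mxE.
by rewrite mulrCA.
Qed.
End CB.

Section CR.
Variable R : comRingType.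
Lemma det_colsub_diag d n (X : 'M[R]_(d, n)) (dl : 'rV[R]_n) (g : 'I_d -> 'I_n) :
  \det (colsub g (X *m diag_mx dl)) = \det (colsub g X) * \prod_j dl 0 (g j).
Proof.
have -> : colsub g (X *m diag_mx dl) = colsub g X *m diag_mx (\row_j dl 0 (g j)).
  by apply/matrixP => i j; rewrite mxE !mul_mx_diag !mxE.
by rewrite det_mulmx det_diag; congr (_ * _); apply: eq_bigr => j _; rewrite mxE.
Qed.

Lemma prod_ifR d (P : pred 'I_d) (a b : R) :
  \prod_j (if P j then a else b) = a ^+ #|P| * b ^+ #|[predC P]|.
Proof.
rewrite (bigID P) /=; congr (_ * _).
  by rewrite (eq_bigr (fun _ => a)) ?prodr_const // => j ->.
by rewrite (eq_bigr (fun _ => b)) ?prodr_const // => j /negPf ->.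
Qed.
End CR.

Definition Lf d : {ffun 'I_d -> 'I_(d + d)} := [ffun j => lshift d j].
Definition Rf d : {ffun 'I_d -> 'I_(d + d)} := [ffun j => rshift d j].
Definition kL d (g : {ffun 'I_d -> 'I_(d + d)}) := #|[pred j | (g j < d)%N]|.

Section Chart.
Variable C : numFieldType.

Lemma colsub_Lf d m (A B : 'M[C]_(m, d)) : colsub (Lf d) (row_mx A B) = A.
Proof. by apply/matrixP => i j; rewrite mxE ffunE row_mxEl. Qed.
Lemma colsub_Rf d m (A B : 'M[C]_(m, d)) : colsub (Rf d) (row_mx A B) = B.
Proof. by apply/matrixP => i j; rewrite mxE ffunE row_mxEr. Qed.

Lemma chart d (Z : C -> 'M[C]_(d, d + d))
  (r : {ffun 'I_d -> 'I_(d + d)} -> {poly C}) (D0 : 'M[C]_d) :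
  (0 < d)%N ->
  (forall x, exists c, c != 0 /\ forall g, pluck (Z x) g = c * (r g).[x]) ->
  Z 0 = D0 *m row_mx 0 1%:M -> \det D0 != 0 ->
  forall g, 'X^(kL g) %| r g.
Proof.
move=> d0 HZ Z0 D00.
set Q := r (Rf d).
have [c0 [c00 H0]] := HZ 0.
have Q0 : Q.[0] != 0.
  have := H0 (Rf d); rewrite Z0 pluckM /pluck colsub_Rf det1 mulr1 => h.
  by apply: contraNneq D00 => q0; rewrite h q0 mulr0.
have QN : Q != 0 by apply: contraNneq Q0 => ->; rewrite horner0.
pose E i j := r (upd (Rf d) i (lshift d j)).
have E0 : forall i j, (E i j).[0] = 0.
  move=> i j; have := H0 (upd (Rf d) i (lshift d j)).
  rewrite Z0 pluckM /pluck det_upd ?colsub_Rf // row_mxEl mxE mulr0 => /esym/eqP.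
  by rewrite mulf_eq0 (negPf c00) /= => /eqP.
pose E' i j := E i j %/ 'X.
have hE : forall i j, E i j = E' i j * 'X.
  move=> i j; rewrite {1}(divp_eq (E i j) 'X).
  have -> : E i j %% 'X = 0.
    by rewrite -[X in _ %% X]subr0 -polyC0 modp_XsubC E0.
  by rewrite addr0.
pose dl : 'rV[{poly C}]_(d + d) := \row_k (if (k < d)%N then 'X else 1).
pose Mp := row_mx (\matrix_(i, j) E' i j) (Q%:M) *m diag_mx dl.
have claim : forall g : {ffun 'I_d -> 'I_(d + d)}, \det (colsub g Mp) = Q ^+ d.-1 * r g.
  move=> g; apply: (poly_eq_off QN) => x Qx.
  have [c [cn Hc]] := HZ x.
  set ZR := colsub (Rf d) (Z x).
  have dZR : \det ZR = c * Q.[x] by exact: Hc.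
  have uZR : ZR \in unitmx by rewrite unitmxE unitfE dZR mulf_neq0.
  have [N eN] : {N | N = invmx ZR *m Z x} by exists (invmx ZR *m Z x).
  have cN : colsub (Rf d) N = 1%:M by rewrite eN colsubM mulVmx.
  have eM : map_mx (horner_eval x) Mp = Q.[x] *: N.
    apply/matrixP => a b; rewrite -(splitK b); case: (split b) => j /=.
      rewrite mxE /Mp mul_mx_diag mxE row_mxEl /dl !mxE /= ltn_ord horner_evalE.
      rewrite -(det_upd a (lshift d j) cN) -/(pluck _ _) eN pluckM det_inv Hc.
      rewrite dZR -hE /E; field; exact/andP.
    rewrite mxE /Mp mul_mx_diag mxE row_mxEr /dl !mxE /= ltnNge leq_addr /= mulr1 horner_evalE.
    move/matrixP: (cN) => /(_ a j); rewrite !mxE ffunE => ->.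
    by rewrite hornerMn mulr_natr.
  have h := det_map_mx (horner_eval x) (colsub g Mp).
  transitivity (\det (map_mx (horner_eval x) (colsub g Mp))); first by rewrite h.
  have -> : map_mx (horner_eval x) (colsub g Mp) = colsub g (Q.[x] *: N).
    by rewrite -eM; apply/matrixP => a b; rewrite !mxE.
  rewrite -/(pluck _ _) pluckZ eN pluckM det_inv Hc dZR hornerM horner_exp.
  have -> : Q.[x] ^+ d = Q.[x] * Q.[x] ^+ d.-1 by rewrite -exprS prednK.
  field; exact/andP.
move=> g; have := claim g.
rewrite det_colsub_diag (eq_bigr (fun j => if (g j < d)%N then 'X else 1));
  last by move=> j _; rewrite mxE.
rewrite prod_ifR expr1n mulr1 => h.
rewrite -(@Gauss_dvdpr _ _ (Q ^+ d.-1)) -?h ?dvdp_mull ?dvdpp //.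
by rewrite coprimep_expl // coprimep_expr // coprimep_sym coprimepX.
Qed.
End Chart.

Definition sw d (k : 'I_(d + d)) : 'I_(d + d) :=
  match split k with inl j => rshift d j | inr j => lshift d j end.
Definition swf d (g : {ffun 'I_d -> 'I_(d + d)}) : {ffun 'I_d -> 'I_(d + d)} :=
  [ffun j => sw (g j)].

Lemma sw_l d (j : 'I_d) : sw (lshift d j) = rshift d j.
Proof. by rewrite /sw -[lshift d j]/(unsplit (inl j)) unsplitK. Qed.
Lemma sw_r d (j : 'I_d) : sw (rshift d j) = lshift d j.
Proof. by rewrite /sw -[rshift d j]/(unsplit (inr j)) unsplitK. Qed.
Lemma sw_lt d (k : 'I_(d + d)) : (sw k < d)%N = ~~ (k < d)%N.
Proof.
rewrite -(splitK k); case: (split k) => j /=.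
  by rewrite sw_l /= ltnNge leq_addr /= ltn_ord.
by rewrite sw_r /= ltn_ord ltnNge leq_addr.
Qed.
Lemma swK d (k : 'I_(d + d)) : sw (sw k) = k.
Proof.
rewrite -(splitK k); case: (split k) => j /=.
  by rewrite sw_l sw_r.
by rewrite sw_r sw_l.
Qed.
Lemma swfK d (g : {ffun 'I_d -> 'I_(d + d)}) : swf (swf g) = g.
Proof. by apply/ffunP => j; rewrite !ffunE swK. Qed.

Definition phi0 d (C : fieldType) (p : {poly C}) : {poly C} :=
  \sum_(i < d.+1) p`_i *: 'X^i.
Definition phi1 d (C : fieldType) (p : {poly C}) : {poly C} :=
  \sum_(i < d.+1) p`_i *: 'X^(d - i).

Section Core.
Variable C : numFieldType.

Lemma colsub_sw d m (A B : 'M[C]_(m, d)) : colsub (@sw d) (row_mx A B) = row_mx B A.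
Proof.
apply/matrixP => a b; rewrite -(splitK b); case: (split b) => j /=;
  by rewrite mxE ?sw_l ?sw_r ?row_mxEl ?row_mxEr.
Qed.

Lemma pluck_sw d (M : 'M[C]_(d, d + d)) g :
  pluck (colsub (@sw d) M) g = pluck M (swf g).
Proof. by rewrite /pluck; congr (\det _); apply/matrixP => a b; rewrite !mxE ffunE. Qed.

Lemma phi0E d (p : {poly C}) x : (phi0 d p).[x] = hev d p x 1.
Proof.
rewrite /phi0 horner_sum /hev; apply: eq_bigr => i _.
by rewrite hornerZ hornerXn expr1n mulr1.
Qed.
Lemma phi1E d (p : {poly C}) x : (phi1 d p).[x] = hev d p 1 x.
Proof.
rewrite /phi1 horner_sum /hev; apply: eq_bigr => i _.
by rewrite hornerZ hornerXn expr1n mulr1.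
Qed.
Lemma phi0_coef d (p : {poly C}) m : (m <= d)%N -> (phi0 d p)`_m = p`_m.
Proof.
move=> md; rewrite /phi0 coef_sum (bigD1 (Ordinal (md : (m < d.+1)%N))) //=.
rewrite coefZ coefXn eqxx mulr1 big1 ?addr0 // => i /eqP ne.
rewrite coefZ coefXn; case: eqP => [e|]; last by rewrite mulr0.
by case: ne; apply: val_inj; rewrite /= e.
Qed.
Lemma phi1_coef d (p : {poly C}) m : (m <= d)%N -> (phi1 d p)`_(d - m) = p`_m.
Proof.
move=> md; rewrite /phi1 coef_sum (bigD1 (Ordinal (md : (m < d.+1)%N))) //=.
rewrite coefZ coefXn eqxx mulr1 big1 ?addr0 // => i /eqP ne.
rewrite coefZ coefXn; case: eqP => [e|]; last by rewrite mulr0.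
case: ne; apply: val_inj => /=.
have := ltn_ord i; rewrite ltnS => id.
by rewrite -(subKn id) -e subKn.
Qed.

Lemma dvdXn_coef (p : {poly C}) k i : 'X^k %| p -> (i < k)%N -> p`_i = 0.
Proof.
move=> /divpK <- ik; by rewrite coefMXn ik.
Qed.
End Core.

Section Core2.
Variable C : numFieldType.

Lemma core d (Y : C -> C -> 'M[C]_(d, d + d))
    (q : {ffun 'I_d -> 'I_(d + d)} -> {poly C}) :
  (0 < d)%N ->
  (forall s t : C, (s, t) != (0, 0) -> exists c : C, c != 0 /\
       forall g, pluck (Y s t) g = c * hev d (q g) s t) ->
  (Y 0 1 == row_mx 1%:M 0)%MS -> (Y 1 1 == row_mx 1%:M 1%:M)%MS ->
  (Y 1 0 == row_mx 0 1%:M)%MS ->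
  forall s t : C, (s, t) != (0, 0) -> (Y s t == row_mx t%:M s%:M)%MS.
Proof.
move=> d0 H HU HV HW.
have nz1 : forall x : C, ((1, x) : C * C) != (0, 0) by move=> x; rewrite xpair_eqE oner_eq0.
have nz1' : forall x : C, ((x, 1) : C * C) != (0, 0) by move=> x; rewrite xpair_eqE oner_eq0 andbF.
have [DW [eW dW]] : exists D : 'M[C]_d, Y 1 0 = D *m row_mx 0 1%:M /\ \det D != 0.
  apply: (eqmx_rep (K := col_mx 0 1%:M)) => //.
  by rewrite mul_row_col mul0mx mul1mx add0r.
have hL : forall g, 'X^(kL g) %| phi1 d (q g).
  apply: (chart (Z := fun x => Y 1 x) (D0 := DW)) => // x.
  have [c [cn hc]] := H 1 x (nz1 x).
  by exists c; split => // g; rewrite phi1E hc.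
have [DU [eU dU]] : exists D : 'M[C]_d, Y 0 1 = D *m row_mx 1%:M 0 /\ \det D != 0.
  apply: (eqmx_rep (K := col_mx 1%:M 0)) => //.
  by rewrite mul_row_col mul0mx mul1mx addr0.
have hR0 : forall g, 'X^(kL g) %| phi0 d (q (swf g)).
  apply: (chart (Z := fun x => colsub (@sw d) (Y x 1)) (D0 := DU)) => //.
    move=> x; have [c [cn hc]] := H x 1 (nz1' x).
    by exists c; split => // g; rewrite phi0E pluck_sw hc.
  by rewrite /= eU colsubM colsub_sw.
have hR : forall g : {ffun 'I_d -> 'I_(d + d)}, 'X^(#|[predC [pred j | (g j < d)%N]]|) %| phi0 d (q g).
  move=> g; have := hR0 (swf g); rewrite swfK /kL.
  congr (_ %| _); congr ('X^ _); apply: eq_card => j.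
  by rewrite !inE ffunE sw_lt.
have mono : forall (g : {ffun 'I_d -> 'I_(d + d)}) s t, hev d (q g) s t =
    (q g)`_(#|[predC [pred j | (g j < d)%N]]|) *
    (s ^+ #|[predC [pred j | (g j < d)%N]]| * t ^+ kL g).
  move=> g s t.
  set m := #|[predC [pred j | (g j < d)%N]]|.
  have km : (kL g + m = d)%N by rewrite /kL /m cardC card_ord.
  have md : (m < d.+1)%N by rewrite ltnS -km leq_addl.
  rewrite /hev (bigD1 (Ordinal md)) //= big1 ?addr0.
    have -> : (d - m = kL g)%N by rewrite -[X in (X - _)%N]km addnK.
    by rewrite mulrA.
  move=> i /eqP ne.
  have ii : (i <= d)%N by rewrite -ltnS.
  have : (q g)`_i = 0.
    case: (ltngtP i m) => [im|mi|ei]; last by case: ne; apply: val_inj.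
      by rewrite -(phi0_coef _ ii); apply: dvdXn_coef (hR g) im.
    rewrite -(phi1_coef _ ii); apply: dvdXn_coef (hL g) _.
    by rewrite ltn_subLR // -[X in (X < _)%N]km addnC ltn_add2r.
  by move=> ->; rewrite !mul0r.
have [DV [eV dV]] : exists D : 'M[C]_d, Y 1 1 = D *m row_mx 1%:M 1%:M /\ \det D != 0.
  apply: (eqmx_rep (K := col_mx 1%:M 0)) => //.
  by rewrite mul_row_col mulmx0 mulmx1 addr0.
have [c1 [c1n hc1]] := H 1 1 (nz1 1).
move=> s t st.
have [c [cn hc]] := H s t st.
set V0 : 'M[C]_(d, d + d) := row_mx 1%:M 1%:M.
pose dl : 'rV[C]_(d + d) := \row_k (if (k < d)%N then t else s).
have eF : row_mx t%:M s%:M = V0 *m diag_mx dl.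
  apply/matrixP => a b; rewrite -(splitK b); case: (split b) => j.
    change (unsplit (inl j)) with (lshift d j).
    rewrite mul_mx_diag row_mxEl [RHS]mxE /V0 row_mxEl /dl !mxE /= ltn_ord.
    by rewrite mulr_natl.
  change (unsplit (inr j)) with (rshift d j).
  rewrite mul_mx_diag row_mxEr [RHS]mxE /V0 row_mxEr /dl !mxE /= ltnNge leq_addr /=.
  by rewrite mulr_natl.
have pF : forall g : {ffun 'I_d -> 'I_(d + d)}, pluck (row_mx t%:M s%:M) g =
    pluck V0 g * (t ^+ kL g * s ^+ #|[predC [pred j | (g j < d)%N]]|).
  move=> g; rewrite eF pluck_diag (eq_bigr (fun j => if (g j < d)%N then t else s)).
    by rewrite prod_if.
  by move=> j _; rewrite mxE.
have g0ex : exists g0 : {ffun 'I_d -> 'I_(d + d)}, pluck (row_mx t%:M s%:M) g0 != 0.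
  have [t0|t0] := eqVneq t 0.
    have s0 : s != 0 by move: st; rewrite t0 xpair_eqE eqxx andbT.
    by exists (Rf d); rewrite /pluck colsub_Rf det_scalar expf_neq0.
  by exists (Lf d); rewrite /pluck colsub_Lf det_scalar expf_neq0.
have [g0 g0n] := g0ex.
apply: (pluck_prop (lam := c * \det DV / c1) _ g0n).
  by rewrite mulf_neq0 ?invr_eq0 // mulf_neq0.
move=> g; rewrite hc mono pF.
have := hc1 g; rewrite mono eV pluckM !expr1n !mulr1 => h.
have -> : (q g)`_(#|[predC [pred j | (g j < d)%N]]|) = \det DV * pluck V0 g / c1.
  by rewrite h; field.
by field.
Qed.
End Core2.

Section Main.
Variable C : numFieldType.

Lemma rank_pluck d n (X : 'M[C]_(d, n)) g : pluck X g != 0 -> \rank X = d.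
Proof.
move=> h; apply/eqP; rewrite eqn_leq rank_leq_row /=.
have u : colsub g X \in unitmx by rewrite unitmxE unitfE.
rewrite -{1}(mxrank_unit u).
have -> : colsub g X = X *m colsub g 1%:M by rewrite mulmx_colsub mulmx1.
exact: mxrankM_maxl.
Qed.

Lemma pluck_rank d n (X : 'M[C]_(d, n)) : \rank X = d -> exists g, pluck X g != 0.
Proof.
move=> rk.
have fX : row_full X^T by rewrite /row_full mxrank_tr rk.
exists (fullrankfun fX).
have := fullrowsub_unit fX; rewrite unitmxE unitfE.
suff -> : rowsub (fullrankfun fX) X^T = (colsub (fullrankfun fX) X)^T by rewrite det_tr.
by apply/matrixP => i j; rewrite !mxE.
Qed.

Lemma rowmx_pluck d s t : (s, t) != (0, 0) ->
  exists g0, pluck (row_mx (t%:M : 'M[C]_d) s%:M) g0 != 0.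
Proof.
move=> st; have [t0|t0] := eqVneq t 0.
  have s0 : s != 0 by move: st; rewrite t0 xpair_eqE eqxx andbT.
  by exists (Rf d); rewrite /pluck colsub_Rf det_scalar expf_neq0.
by exists (Lf d); rewrite /pluck colsub_Lf det_scalar expf_neq0.
Qed.

Lemma unit_cap d n (V U W : 'M[C]_(d, n)) (A B : 'M[C]_d) :
  V = A *m U + B *m W -> \rank V = d -> \rank (V :&: W)%MS = 0%N ->
  A \in unitmx.
Proof.
move=> eV rV rVW; rewrite unitmxE unitfE; apply/negP => /det0P [x x0 xA].
have e : x *m V = (x *m B) *m W by rewrite eV mulmxDr !mulmxA xA mul0mx add0r.
have : (x *m V <= V :&: W)%MS by rewrite sub_capmx submxMl /= e submxMl.
move/mxrankS; rewrite rVW leqn0 mxrank_eq0 mulmx_free_eq0 ?(negPf x0) //.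
by rewrite /row_free rV.
Qed.

Lemma quad_expand n k (J : 'M[C]_n) (X Y : 'M[C]_(k, n)) a b :
  (a *: X + b *: Y) *m J *m (a *: X + b *: Y)^T =
  (a * a) *: (X *m J *m X^T) + (a * b) *: (X *m J *m Y^T + Y *m J *m X^T)
  + (b * b) *: (Y *m J *m Y^T).
Proof.
rewrite linearD /= !linearZ /= !mulmxDl !mulmxDr.
rewrite -!scalemxAl -!scalemxAr !scalerA !scalerDr.
by rewrite [b * a]mulrC !addrA; congr (_ + _); rewrite -!addrA; congr (_ + _).
Qed.
End Main.

Lemma main_aux (C : numFieldType) (d : nat) (J : 'M[C]_(d + d))
    (U V W : 'M[C]_(d, d + d)) :
  (0 < d)%N ->
  symplectic J ->
  lagrangian J U -> lagrangian J V -> lagrangian J W ->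
  \rank (U :&: V)%MS = 0%N -> \rank (U :&: W)%MS = 0%N ->
  \rank (V :&: W)%MS = 0%N ->
  exists f : C -> C -> 'M[C]_(d, d + d),
    [/\ LGmorphism_deg J f d,
        (f 0 1 == U)%MS, (f 1 1 == V)%MS, (f 1 0 == W)%MS &
        forall f' : C -> C -> 'M[C]_(d, d + d),
          LGmorphism_deg J f' d ->
          (f' 0 1 == U)%MS -> (f' 1 1 == V)%MS -> (f' 1 0 == W)%MS ->
          forall s t : C, (s, t) != (0, 0) -> (f' s t == f s t)%MS].
Proof.
move=> d0 _ [rU iU] [rV iV] [rW iW] rUV rUW rVW.
have rUW2 : \rank (U + W)%MS = (d + d)%N.
  by have := mxrank_sum_cap U W; rewrite rUW addn0 rU rW.
have VUW : (V <= U + W)%MS by apply: submx_full; rewrite /row_full rUW2.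
case/sub_addsmxP: VUW => [[A B] /= eV].
have uA : A \in unitmx by exact: (unit_cap eV rV rVW).
have uB : B \in unitmx.
  apply: (@unit_cap _ _ _ V W U B A); first by rewrite addrC.
    done.
  by rewrite capmxC.
set M := invmx A *m B.
have uM : M \in unitmx by rewrite unitmx_mul unitmx_inv uA.
set W' := M *m W.
have eW' : (W' :=: W)%MS by apply: eqmxMfull; rewrite row_full_unit.
have eUW : U + W' = invmx A *m V.
  by rewrite eV mulmxDr !mulmxA mulVmx // mul1mx.
have eVUW : (V :=: (U + W')%R)%MS.
  by apply: eqmx_sym; rewrite eUW; apply: eqmxMfull; rewrite row_full_unit unitmx_inv.
set P : 'M[C]_(d + d) := col_mx U W'.
have uP : P \in unitmx.
  rewrite -row_full_unit /row_full /P -addsmxE.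
  by rewrite (adds_eqmx (eqmx_refl U) eW') rUW2.
pose f := fun s t : C => t *: U + s *: W'.
have fP : forall s t, f s t = row_mx t%:M s%:M *m P.
  by move=> s t; rewrite /P mul_row_col !mul_scalar_mx.
have iW' : W' *m J *m W'^T = 0.
  rewrite /W' trmx_mul !mulmxA.
  have -> : M *m W *m J *m W^T = M *m (W *m J *m W^T) by rewrite !mulmxA.
  by rewrite iW mulmx0 mul0mx.
have iUW' : U *m J *m W'^T + W' *m J *m U^T = 0.
  have := quad_expand J U W' 1 1.
  rewrite iU iW' !scaler0 mulr1 scale1r add0r addr0 !scale1r eUW.
  rewrite trmx_mul !mulmxA.
  have -> : invmx A *m V *m J *m V^T = invmx A *m (V *m J *m V^T) by rewrite !mulmxA.
  by rewrite iV mulmx0 mul0mx => <-.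
exists f; split.
- split.
    move=> s t st; split.
      have [g0 g0n] := rowmx_pluck d st.
      rewrite fP mxrankMfree ?row_free_unit //.
      exact: (rank_pluck g0n).
    by rewrite quad_expand iU iW' iUW' !scaler0 !addr0.
  exists (fun g => \det (\matrix_(i, j) ((colsub g U i j)%:P + 'X * (colsub g W' i j)%:P))).
  split; first by move=> g; have [h _] := hev_det (colsub g U) (colsub g W') 0 0.
  have eP : forall s t g, pluck (f s t) g =
      hev d (\det (\matrix_(i, j) ((colsub g U i j)%:P + 'X * (colsub g W' i j)%:P))) s t.
    move=> s t g; have [_ ->] := hev_det (colsub g U) (colsub g W') s t.
    by rewrite /pluck; congr (\det _); apply/matrixP => i j; rewrite !mxE.
  split.
    move=> s t st; have [g0 g0n] := rowmx_pluck d st.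
    have rf : \rank (f s t) = d by rewrite fP mxrankMfree ?row_free_unit // (rank_pluck g0n).
    have [g gn] := pluck_rank rf.
    by exists g; rewrite -eP.
  move=> s t st; exists 1; split; first exact: oner_neq0.
  by move=> g; rewrite mul1r eP.
- by rewrite /f scale0r scale1r addr0; apply/eqmxP.
- by rewrite /f !scale1r; apply/eqmxP; apply: eqmx_sym.
- by rewrite /f scale0r scale1r add0r; apply/eqmxP.
move=> f' [_ [q [_ [_ Hq]]]] hU hV hW.
set Pi := invmx P.
pose Y := fun s t => f' s t *m Pi.
pose qh := fun h : {ffun 'I_d -> 'I_(d + d)} =>
  \sum_(g : {ffun 'I_d -> 'I_(d + d)}) (\prod_j colsub h Pi (g j) j)%:P * q g.
have HY : forall s t : C, (s, t) != (0, 0) -> exists c : C, c != 0 /\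
       forall h, pluck (Y s t) h = c * hev d (qh h) s t.
  move=> s t st; have [c [cn hc]] := Hq s t st.
  exists c; split => // h.
  rewrite /pluck /Y -mulmx_colsub det_mulmx_rect /qh hev_sum big_distrr.
  by apply: eq_bigr => g _; rewrite hevCM hc -mulrA [X in _ * X]mulrC.
have rP : forall X : 'M[C]_(d, d + d), X *m P *m Pi = X by move=> X; rewrite mulmxK.
have eU : U *m Pi = row_mx 1%:M 0.
  by rewrite -(rP (row_mx 1%:M 0)) /P mul_row_col mul1mx mul0mx addr0.
have eVs : (U + W') *m Pi = row_mx 1%:M 1%:M.
  by rewrite -(rP (row_mx 1%:M 1%:M)) /P mul_row_col !mul1mx.
have eWs : W' *m Pi = row_mx 0 1%:M.
  by rewrite -(rP (row_mx 0 1%:M)) /P mul_row_col mul1mx mul0mx add0r.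
have cY := core d0 HY.
have Y01 : (Y 0 1 == row_mx 1%:M 0)%MS.
  by rewrite -eU; apply/eqmxP; apply: eqmxMr; apply/eqmxP.
have Y11 : (Y 1 1 == row_mx 1%:M 1%:M)%MS.
  rewrite -eVs; apply/eqmxP; apply: eqmxMr.
  by apply: eqmx_trans eVUW; apply/eqmxP.
have Y10 : (Y 1 0 == row_mx 0 1%:M)%MS.
  rewrite -eWs; apply/eqmxP; apply: eqmxMr.
  by apply: eqmx_trans (eqmx_sym eW'); apply/eqmxP.
move=> s t st.
have := cY Y01 Y11 Y10 s t st.
move/eqmxP/(eqmxMr P); rewrite /Y mulmxKV // -fP => h.
by apply/eqmxP.
Qed.

Theorem mainTheorem4 (R : realType) (d : nat) (J : 'M[R[i]]_(d.*2))
    (U V W : 'M[R[i]]_(d, d.*2)) :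
  (0 < d)%N ->
  symplectic J ->
  lagrangian J U -> lagrangian J V -> lagrangian J W ->
  \rank (U :&: V)%MS = 0%N -> \rank (U :&: W)%MS = 0%N ->
  \rank (V :&: W)%MS = 0%N ->
  exists f : R[i] -> R[i] -> 'M[R[i]]_(d, d.*2),
    [/\ LGmorphism_deg J f d,
        (f 0 1 == U)%MS, (f 1 1 == V)%MS, (f 1 0 == W)%MS &
        forall f' : R[i] -> R[i] -> 'M[R[i]]_(d, d.*2),
          LGmorphism_deg J f' d ->
          (f' 0 1 == U)%MS -> (f' 1 1 == V)%MS -> (f' 1 0 == W)%MS ->
          forall s t : R[i], (s, t) != (0, 0) -> (f' s t == f s t)%MS].
Proof.
Proof.
move: J U V W; rewrite -addnn; exact: (@main_aux R[i] d).
Qed.
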